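(* Let $q$ be an odd prime power with characteristic $p$, and let \[ h(t)=\frac{(t-2)(t^{q^2-1}-1)}{(t^{q-1}-1)(t^q-t^{q-1}-1)}\in\mathbb F_p(t). \] Then \[ h(t)=t^{(q-1)^2}+\sum_{\substack{\alpha,\beta\ge 0\\ \beta\le q-2\\ 0<\alpha+\beta\le q-1}}\Bigl[2^{\alpha+\beta}\binom{2(q-1)-\alpha-\beta}{q-1}-\binom{\alpha+\beta}{\alpha}\Bigr]t^{(q-1)^2-(\alpha+\beta q)}, \] with integer coefficients interpreted in $\mathbb F_p$ (in particular $h(t)\in\mathbb F_p[t]$).
   Context: For integers $m\ge 0$ and $k$, $\binom mk$ is the usual binomial coefficient, equal to $0$ unless $0\le k\le m$. *)

(* Defs.v *)
From HB Require Import structures.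
From mathcomp Require Import all_boot all_order all_algebra all_field.
Set Implicit Arguments. Unset Strict Implicit. Unset Printing Implicit Defensive.
Import Order.TTheory GRing.Theory Num.Theory.
Local Open Scope ring_scope.

Definition hnum (F : fieldType) (q : nat) : {poly F} :=
  ('X - 2%:P) * ('X^(q ^ 2 - 1) - 1).

Definition hden (F : fieldType) (q : nat) : {poly F} :=
  ('X^(q.-1) - 1) * ('X^q - 'X^(q.-1) - 1).

Definition hcoef (q a b : nat) : int :=
  ((2 ^ (a + b) * 'C(2 * q.-1 - (a + b), q.-1))%:Z - ('C(a + b, a))%:Z)%R.

Definition hrhs (F : fieldType) (q : nat) : {poly F} :=
  'X^(q.-1 ^ 2) +
  \sum_(a < q) \sum_(b < q.-1 | (0 < a + b)%N && (a + b <= q.-1)%N)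
     ((hcoef q a b)%:~R)%:P * 'X^(q.-1 ^ 2 - (a + b * q)).

(* Main.v *)
Require Import Defs.
From HB Require Import structures.
From mathcomp Require Import all_boot all_order all_algebra all_field.
From mathcomp Require Import zify ring.
Import GRing.Theory.
Local Open Scope ring_scope.

Lemma expo_eq m a b : (b < m.+1)%N -> (a + b <= m.+1)%N ->
  (m.+1 + (m.+1 ^ 2 - (a + b * m.+2)) = (m.+1 - (a + b)) * m.+2 + m.+1 * a)%N.
Proof. move=> H1 H2. nia. Qed.
Lemma tri_inner (V : nmodType) N a (F : nat -> nat -> V) : (a <= N)%N ->
  \sum_(s < N.+1) (if (a <= s)%N then F a (s - a)%N else 0)
  = \sum_(b < N.+1 | (a + b <= N)%N) F a b.
Proof.
move=> aN.
rewrite -(big_mkord xpredT (fun s => if (a <= s)%N then F a (s - a)%N else 0)).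
rewrite -(big_mkord (fun b => a + b <= N)%N (fun b => F a b)).
rewrite (big_cat_nat _ (n:=a)) //=; last by lia.
have -> : \sum_(0 <= i < a) (if (a <= i)%N then F a (i - a)%N else 0) = 0.
  rewrite big_nat_cond big1 // => i /andP[/andP[_ H] _]; by rewrite leqNgt H.
have -> : \sum_(a <= i < N.+1) (if (a <= i)%N then F a (i - a)%N else 0) = \sum_(0 <= i < N.+1 - a) F a i.
  rewrite -{1}(add0n a) big_addn; apply: eq_big_nat => i _; by rewrite leq_addl addnK.
rewrite add0r [RHS](big_cat_nat _ (n:=(N.+1 - a)%N)) //=; last by lia.
rewrite [X in _ = _ + X]big_nat_cond [X in _ = _ + X]big1 ?addr0; last first.
  move=> i /andP[/andP[H1 H2] H3]; lia.
rewrite [RHS]big_nat_cond big_nat_cond.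
apply: eq_big => // i; apply/idP/idP; move/andP=> [/andP[H1 H2] H3]; rewrite ?H1 /=; lia.
Qed.

Lemma tri_reindex (V : nmodType) N (F : nat -> nat -> V) :
 \sum_(a < N.+1) \sum_(b < N.+1 | (a + b <= N)%N) F a b =
 \sum_(s < N.+1) \sum_(a < s.+1) F a (s - a)%N.
Proof.
transitivity (\sum_(s < N.+1) \sum_(a < N.+1) (if (a <= s)%N then F a (s - a)%N else 0)).
  rewrite exchange_big /=; apply: eq_bigr => a _.
  by rewrite tri_inner // -ltnS.
apply: eq_bigr => s _.
rewrite (big_ord_widen_cond N.+1 (fun a => true) (fun a => F a (s - a)%N)) //.
by rewrite [RHS]big_mkcond.

Qed.
Lemma sum_split (V : zmodType) m (F : nat -> nat -> V) :
 \sum_(a < m.+2) \sum_(b < m.+1 | (0 < a+b)%N && (a+b <= m.+1)%N) F a b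
 = \sum_(a < m.+2) \sum_(b < m.+2 | (a+b <= m.+1)%N) F a b - F 0%N 0%N - F 0%N m.+1.
Proof.
have E1 : forall a : 'I_m.+2, \sum_(b < m.+2 | (a+b <= m.+1)%N) F a b =
   \sum_(b < m.+1 | (a+b <= m.+1)%N) F a b + (if a == 0%N :> nat then F a m.+1 else 0).
  move=> a; rewrite big_mkcond big_ord_recr /= -big_mkcond /=.
  congr (_ + _); case: a => [[|i]] //= _.
    by rewrite add0n leqnn.
  by rewrite ifF //; lia.
rewrite (eq_bigr _ (fun a _ => E1 a)) big_split /=.
have -> : \sum_(i < m.+2) (if i == 0%N :> nat then F i m.+1 else 0) = F 0%N m.+1.
  by rewrite big_ord_recl /= big1 ?addr0.
rewrite addrAC addrK.
rewrite big_ord_recl [X in _ = X - _]big_ord_recl /=.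
rewrite addrAC; congr (_ + _); last first.
  rewrite [LHS]big_mkcond [X in _ = X - _]big_mkcond big_ord_recl [X in _ = X - _]big_ord_recl /= addrAC subrr add0r.
  by apply: eq_bigr => b _; rewrite /bump /= !add1n.

Qed.

Lemma KH (F : fieldType) m
 (Hc : forall a b, (0 < a+b <= m.+1)%N -> ((hcoef m.+2 a b)%:~R : F) = (((a+b)%N == m.+1)%:R - ('C(a+b,a))%:R)) :
 'X^(m.+1) * hrhs F m.+2 = 'X^(m.+1 * m.+2)%N *+ 2 + \sum_(a < m.+2) ('X^(m.+1))^+a
   - \sum_(s < m.+2) ('X^(m.+2))^+(m.+1 - s)%N * ('X^(m.+1) + 1)^+s.
Proof.
pose H (a b : nat) : {poly F} := ((((a+b)%N == m.+1)%:R - ('C(a+b,a))%:R : F)%:P * 'X^((m.+1 - (a + b)) * m.+2 + m.+1 * a)%N).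
rewrite /hrhs /= mulrDr -exprD.
have -> : (m.+1 + m.+1 ^ 2 = m.+1 * m.+2)%N by nia.
rewrite mulr_sumr.
rewrite (eq_bigr (fun a : 'I_m.+2 => \sum_(b < m.+1 | (0 < a + b)%N && (a + b <= m.+1)%N) H a b)); last first.
  move=> a _; rewrite mulr_sumr; apply: eq_bigr => b /andP[H1 H2].
  rewrite Hc ?H1 ?H2 // mulrCA -exprD expo_eq //.
rewrite sum_split tri_reindex.
have H00 : H 0%N 0%N = - 'X^(m.+1 * m.+2)%N.
  by rewrite /H /= bin0 sub0r polyCN mulN1r subn0 muln0 addn0.
have H0m : H 0%N m.+1 = 0.
  by rewrite /H /= eqxx bin0 subrr mul0r.
have HS : \sum_(s < m.+2) \sum_(a < s.+1) H a (s - a)%N =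
   \sum_(s < m.+2) \sum_(a < s.+1) (((s == m.+1 :> nat)%:R : F)%:P * 'X^((m.+1 - s) * m.+2 + m.+1 * a)%N
       - ((('C(s,a))%:R : F)%:P * 'X^((m.+1 - s) * m.+2 + m.+1 * a)%N)).
  apply: eq_bigr => s _; apply: eq_bigr => a _.
  have e : (a + (s - a) = s)%N by apply: subnKC; rewrite -ltnS.
  by rewrite /H e polyCB mulrBl.
rewrite H00 H0m subr0 opprK HS.
rewrite (eq_bigr (fun s : 'I_m.+2 => \sum_(a < s.+1) (((s == m.+1 :> nat)%:R : F)%:P * 'X^((m.+1 - s) * m.+2 + m.+1 * a)%N)
   - \sum_(a < s.+1) ((('C(s,a))%:R : F)%:P * 'X^((m.+1 - s) * m.+2 + m.+1 * a)%N))); last first.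
  by move=> s _; rewrite sumrB.
rewrite sumrB.
have E1 : \sum_(s < m.+2) \sum_(a < s.+1) (((s == m.+1 :> nat)%:R : F)%:P * 'X^((m.+1 - s) * m.+2 + m.+1 * a)%N)
   = \sum_(a < m.+2) 'X^(m.+1) ^+ a.
  rewrite big_ord_recr /= big1 ?add0r; last first.
    move=> s _; apply: big1 => a _; by rewrite /= ltn_eqF // mul0r.
  apply: eq_bigr => a _; by rewrite eqxx mul1r subnn mul0n add0n exprM.
have E2 : \sum_(s < m.+2) \sum_(a < s.+1) ((('C(s,a))%:R : F)%:P * 'X^((m.+1 - s) * m.+2 + m.+1 * a)%N)
   = \sum_(s < m.+2) 'X^(m.+2) ^+ (m.+1 - s)%N * ('X^(m.+1) + 1) ^+ s.
  apply: eq_bigr => s _; rewrite exprD1n mulr_sumr; apply: eq_bigr => a _.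
  rewrite rmorph_nat mulr_natl mulrnAr; congr (_ *+ _); rewrite -!exprM -exprD; congr ('X^_); lia.
rewrite E1 E2 mulr2n; ring.
Qed.

Lemma gen (F : fieldType) m
 (Hfrob : forall x y : {poly F}, (x+y)^+m.+2 = x^+m.+2 + y^+m.+2)
 (Hc : forall a b, (0 < a+b <= m.+1)%N -> ((hcoef m.+2 a b)%:~R : F) = (((a+b)%N == m.+1)%:R - ('C(a+b,a))%:R)) :
 hnum F m.+2 = hden F m.+2 * hrhs F m.+2.
Proof.
apply: (mulfI (x := 'X^(m.+1) : {poly F})); first by rewrite expf_neq0 // polyX_eq0.
rewrite [RHS]mulrCA (@KH F m Hc).
set y : {poly F} := 'X^(m.+1).
set Z : {poly F} := 'X^(m.+1 * m.+2)%N.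
set Sy := \sum_(a < m.+2) y ^+ a.
set G := \sum_(s < m.+2) 'X^(m.+2) ^+ (m.+1 - s)%N * (y + 1) ^+ s.
have eA : 'X^(m.+2) = 'X * y :> {poly F} by rewrite exprS.
have eSy : (y - 1) * Sy = Z - 1 by rewrite -subrX1 /y /Z -exprM.
have eG : ('X^(m.+2) - (y + 1)) * G = 'X * y * Z - (Z + 1).
  rewrite /G -(subrXX ('X^(m.+2)) (y+1) m.+2) Hfrob expr1n /y /Z -!exprM -exprS -exprD.
  by congr ('X^_ - ('X^_ + 1)); nia.
rewrite /hnum /hden /=.
have -> : 'X^(m.+2 ^ 2 - 1) = y * Z :> {poly F}.
  by rewrite /y /Z -exprD; congr ('X^_); nia.
have -> : ('X^(m.+1) - 1) * ('X^(m.+2) - 'X^(m.+1) - 1) * (Z *+ 2 + Sy - G)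
   = (y - 1) * ('X * y - y - 1) * (Z *+ 2) + ('X * y - y - 1) * ((y - 1) * Sy)
     - (y - 1) * (('X^(m.+2) - (y + 1)) * G).
  rewrite -/y eA; ring.
rewrite eSy eG; rewrite mulr2n; ring.
Qed.

Lemma coef_X1 (F : fieldType) N i : (('X + 1 : {poly F}) ^+ N)`_i = ('C(N, i))%:R.
Proof.
elim: N i => [|N IH] i.
  by rewrite expr0 coefC; case: i.
rewrite exprSr mulrDr mulr1 coefD coefMX; case: i => [|i] /=.
  by rewrite add0r IH !bin0.
by rewrite !IH binS natrD addrC.
Qed.

Lemma binom_zero (F : fieldType) m
 (Hfrob : forall x y : {poly F}, (x+y)^+m.+2 = x^+m.+2 + y^+m.+2) r :
 (r < m.+1)%N -> ('C(m.+2 + r, m.+1)%:R : F) = 0.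
Proof.
move=> Hr.
rewrite -(coef_X1 F) exprD Hfrob expr1n mulrDl mul1r coefD coefXnM ltnSn add0r.
by rewrite coef_X1 bin_small.
Qed.

Lemma frobp (p k : nat) (Hp : prime p) (R : comNzRingType) (x y : R) : p \in [pchar R] ->
  (x + y) ^+ (p ^ k) = x ^+ (p ^ k) + y ^+ (p ^ k).
Proof.
move=> Hc; elim: k => [|k IH]; first by rewrite !expr1.
rewrite expnSr !exprM IH.
by apply: exprDn_pchar; rewrite pnatE.
Qed.

Lemma hden_neq0 (F : fieldType) m : hden F m.+2 != 0.
Proof.
apply/negP => /eqP H; have := congr1 (horner^~ 0) H.
rewrite /hden /= !hornerE !expr0n /=.
rewrite subrr !sub0r mulrNN mulr1 => /eqP; by rewrite oner_eq0.
Qed.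

Lemma gen_frac (F : fieldType) m
 (Hfrob : forall x y : {poly F}, (x+y)^+m.+2 = x^+m.+2 + y^+m.+2)
 (Hc : forall a b, (0 < a+b <= m.+1)%N -> ((hcoef m.+2 a b)%:~R : F) = (((a+b)%N == m.+1)%:R - ('C(a+b,a))%:R)) :
 (tofrac (hnum F m.+2)) / (tofrac (hden F m.+2)) = tofrac (hrhs F m.+2) :> {fraction {poly F}}.
Proof.
have hD : tofrac (hden F m.+2) != 0 by rewrite tofrac_eq0 hden_neq0.
rewrite (@gen F m Hfrob Hc); apply: (canLR (mulfK hD)).
by rewrite -rmorphM mulrC.
Qed.

Theorem lemma2p3 (p k : nat) (Hp : prime p) (Hodd : odd p) (Hk : (0 < k)%N) :
  let q := (p ^ k)%N in
  (tofrac (hnum 'F_p q)) / (tofrac (hden 'F_p q))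
    = tofrac (hrhs 'F_p q) :> {fraction {poly 'F_p}}.
Proof.
move=> q.
have Hq : q = (p ^ k)%N by [].
clearbody q.
have p2 : (2 < p)%N.
  have := prime_gt1 Hp; case: p Hp Hodd {Hq} => [|[|[|p]]] //.
have q3 : (2 < q)%N.
  apply: (leq_trans p2); rewrite Hq -{1}(expn1 p) leq_pexp2l //; lia.
have [m Hm] : exists m, q = m.+2 by exists q.-2; lia.
have Hch : p \in [pchar 'F_p] := pchar_Fp Hp.
have Hchp : p \in [pchar {poly 'F_p}] by rewrite pchar_poly.
have Hfrob : forall x y : {poly 'F_p}, (x+y)^+m.+2 = x^+m.+2 + y^+m.+2.
  by move=> x y; rewrite -Hm Hq; apply: frobp.
have two_neq0 : (2 : 'F_p) != 0.
  rewrite -(dvdn_pcharf Hch); apply/negP => /dvdn_leq; lia.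
have two_pow : (2 : 'F_p) ^+ m.+1 = 1.
  have := @frobp p k Hp _ (1 : 'F_p) 1 Hch; rewrite -Hq Hm !expr1n -mulr2n exprS.
  by move=> h; apply: (mulfI two_neq0); rewrite h mulr1.
have Hc : forall a b, (0 < a+b <= m.+1)%N -> ((hcoef m.+2 a b)%:~R : 'F_p) = (((a+b)%N == m.+1)%:R - ('C(a+b,a))%:R).
  move=> a b /andP[H1 H2]; rewrite /hcoef intrB -!pmulrn /= natrM.
  case: eqP => E.
    rewrite E natrX two_pow mul1r.
    have -> : (2 * m.+1 - m.+1 = m.+1)%N by lia.
    by rewrite binn.
  have E2 : (a + b < m.+1)%N by rewrite ltn_neqAle H2 andbT; apply/eqP.
  have -> : (2 * m.+1 - (a + b) = m.+2 + (m - (a + b)))%N by lia.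
  by rewrite (@binom_zero _ _ Hfrob) ?mulr0 //; lia.
rewrite Hm; exact: (@gen_frac 'F_p m Hfrob Hc).
Qed.
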